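(* Let $r\ge2$ be an integer and $\psi\in C_p(\mathbb{R})$. Assume there exist constants $m>0$ and $\alpha\ge0$ such that (i) $m\,d(x)\le\psi(x)$ for all $x\in[0,1]$, and (ii) $\Delta_{n,k}(y;\psi)\le\alpha$ for all $n\in\mathbb{N}_0$, $k\in\{0,1,\dots,r^n-1\}$, $y\in(0,1)$. If $2mr>\alpha$, then $U_\psi\in\mathcal{P}_c$ with $c=\frac{2mr-\alpha}{2(r-1)}$.
   Context: $C_p(\mathbb{R})$ denotes the set of all continuous functions $f:\mathbb{R}\to\mathbb{R}$ periodic with period $1$ with $f(0)=0$; $\mathbb{N}_0=\mathbb{N}\cup\{0\}$. $d(x)=\min\{|x-z|:z\in\mathbb{Z}\}$. For $\psi\in C_p(\mathbb{R})$, $U_\psi(x)=\sum_{j=0}^\infty r^{-j}\psi(r^jx)$. For $f\in C_p(\mathbb{R})$ and $(n,k,y)\in\mathbb{N}_0\times\mathbb{Z}\times(0,1)$: $\delta^+_{n,k}(y;f)=\dfrac{f(\frac{k+1}{r^n})-f(\frac{k+y}{r^n})}{\frac{1-y}{r^n}}$, $\delta^-_{n,k}(y;f)=\dfrac{f(\frac{k+y}{r^n})-f(\frac{k}{r^n})}{\frac{y}{r^n}}$, $\Delta_{n,k}(y;f)=2r^n(\delta^+_{n,k}(y;f)-\delta^-_{n,k}(y;f))$. For $c>0$, $\mathcal{P}_c$ is the set of $f\in C_p(\mathbb{R})$ with $\delta^+_{n,k}(y;f)-\delta^-_{n,k}(y;f)\le-c$ for all $(n,k,y)\in\mathbb{N}_0\times\mathbb{Z}\times(0,1)$.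 *)

(* Defs.v *)
From Stdlib Require Import Reals ZArith.
From Coquelicot Require Import Coquelicot.
Open Scope R_scope.

Definition Cp (f : R -> R) : Prop :=
  continuity f /\ (forall x, f (x + 1) = f x) /\ f 0 = 0.

(* d(x) = min{|x - z| : z in Z} = min(frac x, 1 - frac x) *)
Definition dist_Z (x : R) : R := Rmin (frac_part x) (1 - frac_part x).

Definition U (r : nat) (psi : R -> R) (x : R) : R :=
  Series (fun j : nat => / (INR r ^ j) * psi (INR r ^ j * x)).

Definition delta_plus (r n : nat) (k : Z) (y : R) (f : R -> R) : R :=
  (f ((IZR k + 1) / INR r ^ n) - f ((IZR k + y) / INR r ^ n)) / ((1 - y) / INR r ^ n).

Definition delta_minus (r n : nat) (k : Z) (y : R) (f : R -> R) : R :=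
  (f ((IZR k + y) / INR r ^ n) - f (IZR k / INR r ^ n)) / (y / INR r ^ n).

Definition Delta_nk (r n : nat) (k : Z) (y : R) (f : R -> R) : R :=
  2 * INR r ^ n * (delta_plus r n k y f - delta_minus r n k y f).

Definition Pc (r : nat) (c : R) (f : R -> R) : Prop :=
  Cp f /\ forall (n : nat) (k : Z) (y : R), 0 < y < 1 ->
    delta_plus r n k y f - delta_minus r n k y f <= - c.

(* Main.v *)
Require Import Defs.
From Stdlib Require Import Reals ZArith Lra Lia Psatz.
From Coquelicot Require Import Coquelicot.
Open Scope R_scope.

Lemma Int_part_char (x : R) (z : Z) : IZR z <= x < IZR z + 1 -> Int_part x = z.
Proof.
  intros [H1 H2]. destruct (base_Int_part x) as [H3 H4].
  assert (A : (z < Int_part x + 1)%Z).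
  { apply lt_IZR. rewrite plus_IZR. lra. }
  assert (B : (Int_part x < z + 1)%Z).
  { apply lt_IZR. rewrite plus_IZR. lra. }
  lia.
Qed.

Lemma frac_char (x : R) (z : Z) : IZR z <= x < IZR z + 1 -> frac_part x = x - IZR z.
Proof. intros H. unfold frac_part. rewrite (Int_part_char x z H). reflexivity. Qed.

Lemma frac_id (x : R) : 0 <= x < 1 -> frac_part x = x.
Proof. intros H. rewrite (frac_char x 0); simpl; lra. Qed.

Lemma frac_shift (x : R) (j : Z) : frac_part (x + IZR j) = frac_part x.
Proof.
  unfold frac_part at 2. destruct (base_Int_part x) as [H3 H4].
  rewrite (frac_char _ (Int_part x + j)). rewrite plus_IZR; ring.
  rewrite plus_IZR; lra.
Qed.

Lemma per_nat (f : R -> R) : (forall x, f (x + 1) = f x) ->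
  forall (n : nat) x, f (x + INR n) = f x.
Proof.
  intros Hf n. induction n as [|n IH]; intros x.
  - simpl. f_equal; ring.
  - rewrite S_INR. replace (x + (INR n + 1)) with ((x + INR n) + 1) by ring.
    rewrite Hf. apply IH.
Qed.

Lemma per_Z (f : R -> R) : (forall x, f (x + 1) = f x) ->
  forall (z : Z) x, f (x + IZR z) = f x.
Proof.
  intros Hf z x. destruct (Z_le_gt_dec 0 z) as [Hz|Hz].
  - rewrite <- (Z2Nat.id z Hz). rewrite <- INR_IZR_INZ. apply per_nat; auto.
  - assert (Hz' : (0 <= - z)%Z) by lia.
    pose proof (per_nat f Hf (Z.to_nat (- z)) (x + IZR z)) as E.
    rewrite INR_IZR_INZ, Z2Nat.id in E by lia. rewrite opp_IZR in E.
    replace (x + IZR z + - IZR z) with x in E by ring. auto.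
Qed.

Lemma per_frac (f : R -> R) : (forall x, f (x + 1) = f x) ->
  forall x, f x = f (frac_part x).
Proof.
  intros Hf x. unfold frac_part.
  rewrite <- (per_Z f Hf (Int_part x) (x - IZR (Int_part x))). f_equal; ring.
Qed.

Definition fn (r : nat) (psi : R -> R) (j : nat) (x : R) : R :=
  / INR r ^ j * psi (INR r ^ j * x).

Lemma Rge2 (r : nat) : (2 <= r)%nat -> 2 <= INR r.
Proof. intros H. apply le_INR in H. simpl in H. lra. Qed.

Lemma fn_bound (r : nat) psi M : (2 <= r)%nat -> (forall x, 0 <= psi x <= M) ->
  forall j x, 0 <= fn r psi j x <= M * (/ INR r) ^ j.
Proof.
  intros Hr Hb j x. pose proof (Rge2 r Hr). unfold fn. rewrite pow_inv.
  assert (0 < / INR r ^ j) by (apply Rinv_0_lt_compat, pow_lt; lra).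
  destruct (Hb (INR r ^ j * x)). split; nra.
Qed.

Lemma geom_ex (r : nat) M : (2 <= r)%nat -> ex_series (fun j => M * (/ INR r) ^ j).
Proof.
  intros Hr. pose proof (Rge2 r Hr).
  apply (ex_series_scal_l M (fun j => (/ INR r) ^ j)).
  apply ex_series_geom. rewrite Rabs_pos_eq.
  - rewrite <- Rinv_1; apply Rinv_lt_contravar; lra.
  - left; apply Rinv_0_lt_compat; lra.
Qed.

Lemma fn_ex (r : nat) psi M : (2 <= r)%nat -> (forall x, 0 <= psi x <= M) ->
  forall x, ex_series (fun j => fn r psi j x).
Proof.
  intros Hr Hb x. apply (@ex_series_le R_AbsRing R_CompleteNormedModule _ (fun j => M * (/ INR r) ^ j)).
  - intros n. destruct (fn_bound r psi M Hr Hb n x).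
    change (norm (fn r psi n x)) with (Rabs (fn r psi n x)).
    rewrite Rabs_pos_eq; lra.
  - apply geom_ex; auto.
Qed.

Lemma U_eq r psi x : U r psi x = Series (fun j => fn r psi j x).
Proof. reflexivity. Qed.

Lemma U_nonneg (r : nat) psi M : (2 <= r)%nat -> (forall x, 0 <= psi x <= M) ->
  forall x, 0 <= U r psi x.
Proof.
  intros Hr Hb x. rewrite U_eq.
  replace 0 with (0 * Series (fun j => fn r psi j x)) by ring.
  rewrite <- Series_scal_l. apply Series_le.
  - intros n. destruct (fn_bound r psi M Hr Hb n x). lra.
  - apply fn_ex with M; auto.
Qed.

Lemma U_rec (r : nat) psi M : (2 <= r)%nat -> (forall x, 0 <= psi x <= M) ->
  forall x, U r psi x = psi x + / INR r * U r psi (INR r * x).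
Proof.
  intros Hr Hb x. pose proof (Rge2 r Hr). rewrite !U_eq.
  rewrite Series_incr_1 by (apply fn_ex with M; auto).
  rewrite <- Series_scal_l. unfold fn at 1. simpl. rewrite Rinv_1, !Rmult_1_l.
  f_equal. apply Series_ext. intros n. unfold fn. simpl.
  rewrite Rinv_mult, Rmult_assoc. f_equal. f_equal. f_equal. ring.
Qed.

Lemma U_per (r : nat) psi : Cp psi -> forall x, U r psi (x + 1) = U r psi x.
Proof.
  intros [_ [Hp _]] x. rewrite !U_eq. apply Series_ext. intros n. unfold fn.
  f_equal. replace (INR r ^ n * (x + 1)) with (INR r ^ n * x + IZR (Z.of_nat (r ^ n))).
  - apply per_Z; auto.
  - rewrite <- INR_IZR_INZ, pow_INR. ring.
Qed.

Lemma U_zero (r : nat) psi : Cp psi -> U r psi 0 = 0.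
Proof.
  intros [_ [_ H0]]. rewrite U_eq.
  rewrite (Series_ext _ (fun j => 0 * fn r psi j 0)).
  - rewrite Series_scal_l. ring.
  - intros n. unfold fn. rewrite Rmult_0_r, H0. ring.
Qed.

Lemma series_Un_cv (a : nat -> R) : ex_series a -> Un_cv (fun N => sum_f_R0 a N) (Series a).
Proof. intros H. apply Series_correct in H. apply is_series_Reals in H. exact H. Qed.

Definition cvU (r : nat) (psi : R -> R) (H : forall x, ex_series (fun j => fn r psi j x)) :
  forall x, {l : R | Un_cv (fun N => SP (fn r psi) N x) l} :=
  fun x => exist _ (Series (fun j => fn r psi j x)) (series_Un_cv _ (H x)).

Lemma fn_cont (r : nat) psi : continuity psi -> forall j, continuity (fn r psi j).
Proof.
  intros Hc j x.
  change (fn r psi j) with (mult_real_fct (/ INR r ^ j) (comp psi (mult_real_fct (INR r ^ j) (fun y => y)))).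
  apply continuity_pt_scal. apply continuity_pt_comp.
  - apply continuity_pt_scal. apply continuity_pt_id.
  - apply Hc.
Qed.

Lemma U_cont (r : nat) psi M : (2 <= r)%nat -> (forall x, 0 <= psi x <= M) -> continuity psi ->
  continuity (U r psi).
Proof.
  intros Hr Hb Hc.
  assert (Hcvn : CVN_R (fn r psi)).
  { intros r0. exists (fun j => M * (/ INR r) ^ j).
    exists (Series (fun j => Rabs (M * (/ INR r) ^ j))). split.
    - apply series_Un_cv.
      apply (@ex_series_ext R_AbsRing R_NormedModule (fun j => M * (/ INR r) ^ j)).
      + intros n. destruct (fn_bound r psi M Hr Hb n 0). rewrite Rabs_pos_eq; lra.
      + apply geom_ex; auto.
    - intros n y _. destruct (fn_bound r psi M Hr Hb n y). rewrite Rabs_pos_eq; lra. }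
  exact (SFL_continuity (fn r psi) (cvU r psi (fn_ex r psi M Hr Hb)) Hcvn (fn_cont r psi Hc)).
Qed.

Definition Dd (r n : nat) (k : Z) (y : R) (f : R -> R) : R :=
  delta_plus r n k y f - delta_minus r n k y f.

Lemma D_step (r : nat) (F psi : R -> R) : (2 <= r)%nat ->
  (forall x, F x = psi x + / INR r * F (INR r * x)) ->
  forall n k y, 0 < y < 1 -> Dd r (S n) k y F = Dd r (S n) k y psi + Dd r n k y F.
Proof.
  intros Hr Hrec n k y Hy. pose proof (Rge2 r Hr).
  assert (Hpn : 0 < INR r ^ n) by (apply pow_lt; lra).
  assert (E : forall t, F (t / INR r ^ S n) = psi (t / INR r ^ S n) + / INR r * F (t / INR r ^ n)).
  { intros t. rewrite Hrec. f_equal. f_equal. f_equal. simpl. field. lra. }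
  unfold Dd, delta_plus, delta_minus. rewrite !E. simpl. field. lra.
Qed.

Lemma D_zero (r : nat) (F : R -> R) : (forall x, F (x + 1) = F x) -> F 0 = 0 ->
  forall k y, 0 < y < 1 -> Dd r 0 k y F = - F y / (y * (1 - y)).
Proof.
  intros Hp H0 k y Hy. unfold Dd, delta_plus, delta_minus. simpl.
  rewrite !Rdiv_1_r.
  rewrite (Rplus_comm (IZR k) 1), (Rplus_comm (IZR k) y), (per_Z F Hp k 1), (per_Z F Hp k y).
  replace (IZR k) with (0 + IZR k) by ring. rewrite (per_Z F Hp k 0).
  replace 1 with (0 + 1) at 1 by ring. rewrite Hp, H0. field. split; lra.
Qed.

Lemma D_psi (r : nat) psi alpha : (2 <= r)%nat -> Cp psi ->
  (forall (n : nat) (k : Z) (y : R),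
      (0 <= k < Z.of_nat (r ^ n)%nat)%Z -> 0 < y < 1 -> Delta_nk r n k y psi <= alpha) ->
  forall n k y, 0 < y < 1 -> Dd r n k y psi <= alpha / (2 * INR r ^ n).
Proof.
  intros Hr [_ [Hp _]] HD n k y Hy. pose proof (Rge2 r Hr).
  assert (Hpn : 0 < INR r ^ n) by (apply pow_lt; lra).
  set (N := Z.of_nat (r ^ n)).
  assert (HN : (0 < N)%Z).
  { unfold N. apply inj_lt with (n := 0%nat). apply INR_lt. rewrite pow_INR. simpl. lra. }
  pose proof (Z.div_mod k N ltac:(lia)) as Ek.
  pose proof (Z.mod_pos_bound k N HN) as Bk.
  assert (HNR : IZR N = INR r ^ n) by (unfold N; rewrite <- INR_IZR_INZ, pow_INR; reflexivity).
  assert (E : forall t, psi ((IZR k + t) / INR r ^ n) = psi ((IZR (k mod N) + t) / INR r ^ n)).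
  { intros t. rewrite <- (per_Z psi Hp (k / N) ((IZR (k mod N) + t) / INR r ^ n)). f_equal.
    rewrite Ek at 1. rewrite plus_IZR, mult_IZR, HNR. field. lra. }
  assert (E0 : psi (IZR k / INR r ^ n) = psi (IZR (k mod N) / INR r ^ n)).
  { replace (IZR k) with (IZR k + 0) by ring. replace (IZR (k mod N)) with (IZR (k mod N) + 0) by ring.
    apply E. }
  pose proof (HD n (k mod N)%Z y Bk Hy) as HH. unfold Delta_nk in HH.
  unfold Dd, delta_plus, delta_minus. rewrite !E, E0.
  set (Q := (psi ((IZR (k mod N) + 1) / INR r ^ n) - psi ((IZR (k mod N) + y) / INR r ^ n)) /
         ((1 - y) / INR r ^ n) -
         (psi ((IZR (k mod N) + y) / INR r ^ n) - psi (IZR (k mod N) / INR r ^ n)) / (y / INR r ^ n)) in *.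
  apply (Rmult_le_reg_l (2 * INR r ^ n)); [lra|].
  replace (2 * INR r ^ n * (alpha / (2 * INR r ^ n))) with alpha by (field; lra).
  exact HH.
Qed.

Lemma key_ineq (r : nat) (y : R) : (2 <= r)%nat -> 0 <= y < 1 ->
  0 <= (INR r - 1) * Rmin y (1 - y) - INR r * y * (1 - y)
       + frac_part (INR r * y) * (1 - frac_part (INR r * y)).
Proof.
  intros Hr Hy. pose proof (Rge2 r Hr) as H2.
  set (t := frac_part (INR r * y)).
  assert (Ht : 0 <= t < 1) by (unfold t; destruct (base_fp (INR r * y)); lra).
  assert (Ht2 : 0 <= t * (1 - t)) by nra.
  unfold Rmin. destruct (Rle_dec y (1 - y)) as [Hle|Hgt].
  - destruct (Rlt_dec (INR r * y) 1) as [Hl|Hl].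
    + assert (t = INR r * y) by (unfold t; apply frac_id; nra).
      rewrite H. assert (0 <= (INR r - 1) * y) by nra.
      assert (0 <= (INR r - 1) * y * (1 - INR r * y)) by nra. nra.
    + assert (0 <= y * (INR r * y - 1)) by nra. nra.
  - destruct (Rle_dec (INR r * y) (INR r - 1)) as [Hl|Hl].
    + assert (0 <= (1 - y) * (INR r - 1 - INR r * y)) by nra. nra.
    + assert (t = INR r * y - (INR r - 1)).
      { unfold t. rewrite (frac_char _ (Z.of_nat r - 1)).
        - rewrite minus_IZR, <- INR_IZR_INZ. simpl. ring.
        - rewrite minus_IZR, <- INR_IZR_INZ. simpl. nra. }
      rewrite H. assert (0 <= (1 - y) * (INR r * y - (INR r - 1))) by nra.
      assert (0 <= (1 - y) * (INR r * y - (INR r - 1)) * (INR r - 1)) by nra. nra.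
Qed.

Lemma W_step (r : nat) (F psi : R -> R) (m : R) : (2 <= r)%nat -> 0 < m ->
  (forall x, F (x + 1) = F x) ->
  (forall x, F x = psi x + / INR r * F (INR r * x)) ->
  (forall x, 0 <= x <= 1 -> m * dist_Z x <= psi x) ->
  forall x,
  let K := m * INR r / (INR r - 1) in
  let W := fun z => F z - K * frac_part z * (1 - frac_part z) in
  W (INR r * x) / INR r <= W x.
Proof.
  intros Hr Hm Hp Hrec Hpsi x K W. pose proof (Rge2 r Hr) as H2.
  set (y := frac_part x).
  assert (Hy : 0 <= y < 1) by (unfold y; destruct (base_fp x); lra).
  assert (Ex : x = y + IZR (Int_part x)) by (unfold y, frac_part; ring).
  assert (Erx : INR r * x = INR r * y + IZR (Int_part x * Z.of_nat r)).
  { rewrite mult_IZR, <- INR_IZR_INZ. rewrite Ex at 1. ring. }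
  assert (Fx : F x = F y) by (rewrite Ex; apply per_Z; auto).
  assert (Frx : F (INR r * x) = F (INR r * y)) by (rewrite Erx; apply per_Z; auto).
  assert (frx : frac_part (INR r * x) = frac_part (INR r * y)) by (rewrite Erx; apply frac_shift).
  assert (fy : frac_part y = y) by (apply frac_id; auto).
  unfold W. rewrite Fx, Frx, frx. fold y. rewrite (Hrec y).
  pose proof (Hpsi y ltac:(lra)) as Hd. unfold dist_Z in Hd. rewrite fy in Hd.
  pose proof (key_ineq r y Hr Hy) as Hk.
  set (t := frac_part (INR r * y)) in *.
  set (mn := Rmin y (1 - y)) in *.
  assert (Hr1 : 0 < INR r - 1) by lra.
  assert (E : K = m * INR r / (INR r - 1)) by reflexivity.
  assert (HK : K * (INR r - 1) = m * INR r) by (rewrite E; field; lra).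
  apply (Rmult_le_reg_l (INR r * (INR r - 1))); [nra|].
  replace (INR r * (INR r - 1) * ((F (INR r * y) - K * t * (1 - t)) / INR r))
    with ((INR r - 1) * F (INR r * y) - K * (INR r - 1) * t * (1 - t)) by (field; lra).
  replace (INR r * (INR r - 1) * (psi y + / INR r * F (INR r * y) - K * y * (1 - y)))
    with (INR r * (INR r - 1) * psi y + (INR r - 1) * F (INR r * y) - K * (INR r - 1) * INR r * y * (1 - y)) by (field; lra).
  rewrite HK.
  assert (0 <= m * ((INR r - 1) * mn - INR r * y * (1 - y) + t * (1 - t))) by (apply Rmult_le_pos; lra).
  assert (0 <= INR r * (m * ((INR r - 1) * mn - INR r * y * (1 - y) + t * (1 - t)))) by (apply Rmult_le_pos; lra).
  assert (0 <= INR r * (INR r - 1) * (psi y - m * mn)) by (apply Rmult_le_pos; [nra|lra]).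
  lra.
Qed.

Lemma W_nonneg (r : nat) (F psi : R -> R) (m : R) : (2 <= r)%nat -> 0 < m ->
  (forall x, F (x + 1) = F x) ->
  (forall x, F x = psi x + / INR r * F (INR r * x)) ->
  (forall x, 0 <= x <= 1 -> m * dist_Z x <= psi x) ->
  (forall x, 0 <= F x) ->
  forall y, 0 <= y < 1 -> m * INR r / (INR r - 1) * y * (1 - y) <= F y.
Proof.
  intros Hr Hm Hp Hrec Hpsi Hnn y Hy. pose proof (Rge2 r Hr) as H2.
  set (K := m * INR r / (INR r - 1)).
  assert (HK : 0 < K) by (unfold K; apply Rdiv_lt_0_compat; nra).
  set (W := fun z => F z - K * frac_part z * (1 - frac_part z)).
  assert (Wlb : forall z, - K <= W z).
  { intros z. unfold W. destruct (base_fp z). pose proof (Hnn z).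
    assert (frac_part z * (1 - frac_part z) <= 1) by nra. nra. }
  assert (Wst : forall x, W (INR r * x) / INR r <= W x) by (intros x; apply (W_step r F psi m); auto).
  assert (Wit : forall N x, W (INR r ^ N * x) / INR r ^ N <= W x).
  { induction N as [|N IH]; intros x.
    - simpl. rewrite Rmult_1_l, Rdiv_1_r. lra.
    - pose proof (IH (INR r * x)) as I1. pose proof (Wst x) as I2.
      assert (Hpn : 0 < INR r ^ N) by (apply pow_lt; lra).
      replace (INR r ^ S N * x) with (INR r ^ N * (INR r * x)) by (simpl; ring).
      replace (W (INR r ^ N * (INR r * x)) / INR r ^ S N) with
        ((W (INR r ^ N * (INR r * x)) / INR r ^ N) / INR r) by (simpl; field; lra).
      apply Rle_trans with (W (INR r * x) / INR r); [|exact I2].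
      unfold Rdiv. apply Rmult_le_compat_r; [left; apply Rinv_0_lt_compat; lra|exact I1]. }
  assert (W0 : 0 <= W y).
  { destruct (Rle_lt_dec 0 (W y)) as [h|h]; [exact h|exfalso].
    destruct (archimed (K / - W y)) as [Ha _].
    set (N := Z.to_nat (up (K / - W y))).
    assert (HKW : 0 < K / - W y) by (apply Rdiv_lt_0_compat; lra).
    assert (HN : K / - W y < INR N).
    { unfold N. rewrite INR_IZR_INZ, Z2Nat.id; [lra|].
      apply le_IZR. lra. }
    assert (Hlt : (N < r ^ N)%nat) by (apply Nat.pow_gt_lin_r; lia).
    apply lt_INR in Hlt. rewrite pow_INR in Hlt.
    assert (Hpn : 0 < INR r ^ N) by (apply pow_lt; lra).
    pose proof (Wit N y) as I. pose proof (Wlb (INR r ^ N * y)) as L.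
    assert (- K / INR r ^ N <= W y).
    { apply Rle_trans with (W (INR r ^ N * y) / INR r ^ N); [|exact I].
      unfold Rdiv. apply Rmult_le_compat_r; [left; apply Rinv_0_lt_compat; lra|exact L]. }
    assert (K < INR r ^ N * - W y).
    { apply (Rmult_lt_compat_r (- W y)) in HN; [|lra].
      unfold Rdiv in HN. rewrite Rmult_assoc, Rinv_l, Rmult_1_r in HN by lra. nra. }
    assert (- K <= W y * INR r ^ N).
    { apply (Rmult_le_compat_r (INR r ^ N)) in H; [|lra].
      unfold Rdiv in H. rewrite Rmult_assoc, Rinv_l, Rmult_1_r in H by lra. exact H. }
    nra. }
  unfold W in W0. rewrite frac_id in W0 by lra. lra.
Qed.

Theorem theorem3p5 (r : nat) (psi : R -> R) (m alpha : R) :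
  (2 <= r)%nat -> Cp psi -> 0 < m -> 0 <= alpha ->
  (forall x, 0 <= x <= 1 -> m * dist_Z x <= psi x) ->
  (forall (n : nat) (k : Z) (y : R),
      (0 <= k < Z.of_nat (r ^ n)%nat)%Z -> 0 < y < 1 -> Delta_nk r n k y psi <= alpha) ->
  2 * m * INR r > alpha ->
  Pc r ((2 * m * INR r - alpha) / (2 * (INR r - 1))) (U r psi).
Proof.
  intros Hr Hcp Hm Ha Hpsi HD Hc. pose proof (Rge2 r Hr) as H2.
  destruct Hcp as [Hcont [Hp H0]] eqn:Ecp.
  assert (Hnn01 : forall x, 0 <= x <= 1 -> 0 <= psi x).
  { intros x Hx. apply Rle_trans with (m * dist_Z x); [|auto].
    apply Rmult_le_pos; [lra|]. unfold dist_Z, Rmin. destruct (base_fp x).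
    destruct (Rle_dec _ _); lra. }
  destruct (continuity_ab_maj psi 0 1 ltac:(lra) (fun c _ => Hcont c)) as [Mx [HMx _]].
  set (M := psi Mx).
  assert (Hb : forall x, 0 <= psi x <= M).
  { intros x. rewrite (per_frac psi Hp x). destruct (base_fp x).
    split; [apply Hnn01; lra|apply HMx; lra]. }
  assert (Hrec := U_rec r psi M Hr Hb).
  assert (HUp := U_per r psi Hcp).
  assert (HU0 := U_zero r psi Hcp).
  assert (HUnn := U_nonneg r psi M Hr Hb).
  split.
  - split; [apply (U_cont r psi M Hr Hb Hcont)|split; auto].
  - intros n k y Hy.
    assert (Hr1 : 0 < INR r - 1) by lra.
    assert (Hind : forall n, Dd r n k y (U r psi) <=
       alpha / (2 * (INR r - 1)) - alpha / (2 * (INR r - 1) * INR r ^ n)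
       - U r psi y / (y * (1 - y))).
    { induction n0 as [|n0 IH].
      - rewrite (D_zero r (U r psi) HUp HU0 k y Hy). simpl.
        replace (alpha / (2 * (INR r - 1)) - alpha / (2 * (INR r - 1) * 1)) with 0 by (field; lra).
        unfold Rdiv. lra.
      - rewrite (D_step r (U r psi) psi Hr Hrec n0 k y Hy).
        pose proof (D_psi r psi alpha Hr Hcp HD (S n0) k y Hy) as Hps.
        assert (Hpn : 0 < INR r ^ n0) by (apply pow_lt; lra).
        assert (E : alpha / (2 * INR r ^ S n0) - alpha / (2 * (INR r - 1) * INR r ^ n0)
                    = - alpha / (2 * (INR r - 1) * INR r ^ S n0)) by (simpl; field; lra).
        unfold Rdiv in *. lra. }
    pose proof (Hind n) as Hn. unfold Dd in Hn.
    pose proof (W_nonneg r (U r psi) psi m Hr Hm HUp Hrec Hpsi HUnn y ltac:(lra)) as HW.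
    assert (Hpn : 0 < INR r ^ n) by (apply pow_lt; lra).
    assert (0 <= alpha / (2 * (INR r - 1) * INR r ^ n)).
    { apply Rdiv_le_0_compat; [lra|]. apply Rmult_lt_0_compat; lra. }
    assert (Hyy : 0 < y * (1 - y)) by nra.
    assert (m * INR r / (INR r - 1) <= U r psi y / (y * (1 - y))).
    { apply (Rmult_le_reg_r (y * (1 - y))); [lra|].
      unfold Rdiv at 2. rewrite Rmult_assoc, Rinv_l, Rmult_1_r by lra. lra. }
    assert (E : - ((2 * m * INR r - alpha) / (2 * (INR r - 1)))
                = alpha / (2 * (INR r - 1)) - m * INR r / (INR r - 1)) by (field; lra).
    rewrite E. lra.
Qed.
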